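(* Let $H$ be any graph obtained from $F_4$ by splitting a vertex. Then $H$ contains $K_{3,4}$ as a minor.
   Context: $F_4$ is the graph with vertex set $\{f^1,f^2\}\cup\{f^i_j: i\in\{1,2\}, j\in\{1,2,3,4\}\}$ and the 16 edges: for each $i\in\{1,2\}$, $f^if^i_1$, $f^if^i_2$, $f^if^i_4$, $f^i_3f^i_1$, $f^i_3f^i_2$, $f^i_3f^i_4$; and $f^1_jf^2_{5-j}$ for $j=1,2,3,4$. Splitting a vertex $v$ of a graph means: delete $v$, add two new adjacent vertices $v_1,v_2$, and join each neighbour of $v$ to exactly one of $v_1,v_2$, so that each of $v_1,v_2$ is joined to at least two neighbours of $v$. *)

(* Defs.v *)
(* Finite simple graphs as symmetric irreflexive relations on a finType. *)
From mathcomp Require Import all_boot.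
Set Implicit Arguments. Unset Strict Implicit. Unset Printing Implicit Defensive.

Section Graphs.
Variables (T U : finType).

Definition connected_in (e : rel T) (X : {set T}) : Prop :=
  forall x y, x \in X -> y \in X ->
    connect [rel a b | [&& a \in X, b \in X & e a b]] x y.

Definition minor_model (eH : rel U) (e : rel T) (phi : U -> {set T}) : Prop :=
  [/\ forall u, phi u != set0,
      forall u w, u != w -> [disjoint phi u & phi w],
      forall u, connected_in e (phi u)
    & forall u w, eH u w -> exists a b, [/\ a \in phi u, b \in phi w & e a b]].

Definition has_minor (eH : rel U) (e : rel T) : Prop :=
  exists phi : U -> {set T}, minor_model eH e phi.
End Graphs.

(* Splitting vertex v of (T, e): v is replaced by v1 := Some v and
   v2 := None; v1 v2 adjacent; neighbours of v in S go to v1, the other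
   neighbours of v go to v2; other vertices/edges unchanged. *)
Definition split_rel (T : finType) (e : rel T) (v : T) (S : {set T}) : rel (option T) :=
  fun x y => match x, y with
  | Some a, Some b =>
      if a == v then [&& b != v, e v b & b \in S]
      else if b == v then [&& e v a & a \in S]
      else e a b
  | None, Some b => (b == v) || [&& b != v, e v b & b \notin S]
  | Some a, None => (a == v) || [&& a != v, e v a & a \notin S]
  | None, None => false
  end.

Definition split_ok (T : finType) (e : rel T) (v : T) (S : {set T}) : Prop :=
  [/\ S \subset [set w | e v w],
      1 < #|S|
    & 1 < #|[set w | e v w] :\: S|].

Definition Kmn (m n : nat) : rel ('I_m + 'I_n)%type :=
  fun x y => match x, y with
  | inl _, inr _ | inr _, inl _ => true
  | _, _ => false
  end.
Arguments Kmn m n : clear implicits.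

(* F_4: vertex f^i = (i-1, None), f^i_j = (i-1, Some (j-1)). *)
Definition F4V : finType := ('I_2 * option 'I_4)%type.

Definition F4_base (x y : F4V) : bool :=
  match x, y with
  | (i, None), (i', Some j) => (i == i') && (val j != 2)        (* f^i f^i_j, j in {1,2,4} *)
  | (i, Some j3), (i', Some j) =>
      [&& i == i', val j3 == 2 & val j != 2]                   (* f^i_3 f^i_j, j in {1,2,4} *)
      || [&& val i == 0, val i' == 1 & val j3 + val j == 3]    (* f^1_j f^2_{5-j} *)
  | _, _ => false
  end.

Definition F4 : rel F4V := fun x y => F4_base x y || F4_base y x.

(* Main.v *)
Require Import Defs.
From mathcomp Require Import all_boot.
From Stdlib Require Import FunctionalExtensionality.
From mathcomp Require Import zify.
Set Implicit Arguments. Unset Strict Implicit. Unset Printing Implicit Defensive.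

Notation ov i j := (Some (@Ordinal 2 i isT, Some (@Ordinal 4 j isT)) : option F4V).
Notation oc i := (Some (@Ordinal 2 i isT, None) : option F4V).

Definition allF4 : seq F4V :=
  [seq (i, o) | i <- [:: @Ordinal 2 0 isT; @Ordinal 2 1 isT],
     o <- [:: None; Some (@Ordinal 4 0 isT); Some (@Ordinal 4 1 isT);
              Some (@Ordinal 4 2 isT); Some (@Ordinal 4 3 isT)]].

Lemma allF4P (w : F4V) : w \in allF4.
Proof. by case: w => [[[|[|i]] hi] [[[|[|[|[|j]]]] hj]|]]. Qed.

Lemma allF4_uniq : uniq allF4.
Proof. by []. Qed.
Definition models : seq (seq (seq (option F4V))) := [::
  [:: [:: ov 0 0; ov 1 3; oc 1]; [:: ov 0 1; ov 1 2]; [:: ov 0 3; None]; [:: oc 0]; [:: ov 0 2]; [:: ov 1 0]; [:: ov 1 1]];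
  [:: [:: ov 0 0; ov 1 3]; [:: ov 0 3; ov 1 0]; [:: ov 1 1; None]; [:: oc 0; ov 0 1]; [:: ov 0 2]; [:: oc 1]; [:: ov 1 2]];
  [:: [:: ov 0 0; ov 0 2]; [:: ov 0 1; ov 1 2]; [:: ov 0 3; ov 1 0; oc 1]; [:: oc 0]; [:: ov 1 1]; [:: ov 1 3]; [:: None]];
  [:: [:: ov 0 0; None]; [:: ov 0 1; ov 1 2]; [:: ov 0 3; ov 1 0; oc 1]; [:: oc 0]; [:: ov 0 2]; [:: ov 1 1]; [:: ov 1 3]];
  [:: [:: ov 0 0; ov 1 3]; [:: ov 0 2; ov 1 1]; [:: ov 0 3; ov 1 0]; [:: oc 0; ov 0 1]; [:: oc 1]; [:: ov 1 2]; [:: None]];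
  [:: [:: ov 0 0; ov 1 3; oc 1]; [:: ov 0 1; ov 1 2]; [:: ov 0 2; ov 0 3]; [:: oc 0]; [:: ov 1 0]; [:: ov 1 1]; [:: None]];
  [:: [:: oc 0; ov 0 0; ov 1 3]; [:: ov 0 2; ov 1 1]; [:: ov 1 0; ov 1 2]; [:: ov 0 1]; [:: ov 0 3]; [:: oc 1]; [:: None]];
  [:: [:: ov 0 0; ov 1 3]; [:: ov 0 3; ov 1 0]; [:: ov 1 1; ov 1 2]; [:: oc 0; ov 0 1]; [:: ov 0 2]; [:: oc 1]; [:: None]];
  [:: [:: oc 0; ov 0 3; ov 1 0]; [:: ov 0 2; ov 1 1]; [:: ov 1 2; ov 1 3]; [:: ov 0 0]; [:: ov 0 1]; [:: oc 1]; [:: None]];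
  [:: [:: oc 0; ov 0 3; ov 1 0]; [:: ov 0 2; ov 1 1]; [:: ov 1 3; None]; [:: ov 0 0]; [:: ov 0 1]; [:: oc 1]; [:: ov 1 2]];
  [:: [:: ov 0 0; ov 1 3]; [:: ov 0 3; ov 1 0]; [:: ov 1 1; None]; [:: oc 0; ov 0 1]; [:: ov 0 2]; [:: oc 1]; [:: ov 1 2]];
  [:: [:: oc 0; ov 0 0; ov 1 3]; [:: ov 0 2; ov 1 1]; [:: ov 1 0; None]; [:: ov 0 1]; [:: ov 0 3]; [:: oc 1]; [:: ov 1 2]]].

Definition uidx (u : ('I_3 + 'I_4)%type) : nat :=
  match u with inl i => val i | inr j => 3 + val j end.

Definition phi_of (L : seq (seq (option F4V))) (u : ('I_3 + 'I_4)%type)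
  : {set option F4V} := [set x in nth [::] L (uidx u)].

Section Check.
Variable T : finType.
Variable e : rel T.

Fixpoint conn_aux (seen r : seq T) : bool :=
  match r with
  | [::] => true
  | y :: r' => has (fun z => e y z && e z y) seen && conn_aux (y :: seen) r'
  end.

Definition conn_ok (l : seq T) : bool :=
  match l with [::] => true | x :: r => conn_aux [:: x] r end.

Definition check (L : seq (seq T)) : bool :=
  [&& all (fun l => l != [::]) L,
      size L == 7,
      all (fun i => all (fun j => (i == j) ||
          all (fun x => x \notin nth [::] L j) (nth [::] L i)) (iota 0 7)) (iota 0 7),
      all conn_ok L,
      all (fun i => all (fun j => has (fun a => has (fun b => e a b)
          (nth [::] L (3 + j))) (nth [::] L i)) (iota 0 4)) (iota 0 3)
    & all (fun i => all (fun j => has (fun a => has (fun b => e a b)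
          (nth [::] L i)) (nth [::] L (3 + j))) (iota 0 4)) (iota 0 3)].

Definition Rl (l : seq T) : rel T := [rel a b | [&& a \in l, b \in l & e a b]].

Lemma conn_auxP (l : seq T) (x0 : T) (seen r : seq T) :
  let R := Rl l in
  {subset seen <= l} -> {subset r <= l} ->
  (forall z, z \in seen -> connect R x0 z && connect R z x0) ->
  conn_aux seen r ->
  forall z, z \in r -> connect R x0 z && connect R z x0.
Proof.
move=> R; elim: r seen => [|y r IH] seen hs hr hc //= /andP [/hasP [z zs /andP [eyz ezy]] hrest].
have yl : y \in l by apply: hr; rewrite inE eqxx.
have zl : z \in l by apply: hs.
have Ryz : R y z by rewrite /R /Rl /= yl zl eyz.
have Rzy : R z y by rewrite /R /Rl /= yl zl ezy.
have hy : connect R x0 y && connect R y x0.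
  case/andP: (hc z zs) => c1 c2; apply/andP; split.
    by apply: connect_trans c1 (connect1 Rzy).
  by apply: connect_trans (connect1 Ryz) c2.
move=> w; rewrite inE => /orP [/eqP -> // | wr].
apply: (IH (y :: seen)) => //.
- by move=> q; rewrite inE => /orP [/eqP -> // | /hs].
- by move=> q qr; apply: hr; rewrite inE qr orbT.
- by move=> q; rewrite inE => /orP [/eqP -> // | /hc].
Qed.

Lemma conn_okP (l : seq T) : conn_ok l ->
  forall x y, x \in l -> y \in l ->
    connect [rel a b | [&& a \in l, b \in l & e a b]] x y.
Proof.
case: l => [|x0 r] // h x y.
set R := [rel a b | _].
have H : forall z, z \in x0 :: r -> connect R x0 z && connect R z x0.
  move=> z; rewrite inE => /orP [/eqP -> | zr]; first by rewrite connect0.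
  apply: (@conn_auxP (x0 :: r) x0 [:: x0] r) => //.
  - by move=> q; rewrite inE => /eqP ->; rewrite inE eqxx.
  - by move=> q qr; rewrite inE qr orbT.
  - by move=> q; rewrite inE => /eqP ->; rewrite connect0.
move=> /H /andP [_ c1] /H /andP [c2 _].
exact: connect_trans c1 c2.
Qed.
End Check.

Lemma uidx_lt u : uidx u < 7.
Proof. case: u => [[i hi]|[j hj]] /=; lia. Qed.

Lemma uidx_inj : injective uidx.
Proof.
case=> [[i hi]|[j hj]] [[i' hi']|[j' hj']] //= h.
- by congr inl; apply: val_inj.
- exfalso; lia.
- exfalso; lia.
- by congr inr; apply: val_inj => /=; lia.
Qed.

Lemma checkP (e : rel (option F4V)) L :
  check e L -> minor_model (Kmn 3 4) e (phi_of L).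
Proof.
case/and5P=> hne /eqP hsz hdisj hconn /andP [hE1 hE2].
have memL : forall u, nth [::] L (uidx u) \in L.
  by move=> u; apply: mem_nth; rewrite hsz uidx_lt.
split.
- move=> u; apply/set0Pn; rewrite /phi_of.
  move: (allP hne _ (memL u)); case: (nth [::] L (uidx u)) => [|x r] // _.
  by exists x; rewrite !inE eqxx.
- move=> u w uw; rewrite disjoint_subset; apply/subsetP => x; rewrite /phi_of !inE => xu; apply/negP => xw.
  have iu : uidx u \in iota 0 7 by rewrite mem_iota uidx_lt.
  have iw : uidx w \in iota 0 7 by rewrite mem_iota uidx_lt.
  move: (allP (allP hdisj _ iu) _ iw).
  have -> : (uidx u == uidx w) = false.
    by apply/negbTE; apply: contra uw => /eqP /uidx_inj ->.
  by move=> /= /allP /(_ x xu); rewrite xw.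
- move=> u x y; rewrite /phi_of !inE => xu yu.
  have := conn_okP (allP hconn _ (memL u)) xu yu.
  apply: connect_sub => a b /= /andP [al /andP [bl eab]].
  by apply: connect1; rewrite /= !inE al bl eab.
- case=> [[i hi]|[j hj]] [[i' hi']|[j' hj']] //= _.
  + have ii : i \in iota 0 3 by rewrite mem_iota.
    have jj : j' \in iota 0 4 by rewrite mem_iota.
    case/hasP: (allP (allP hE1 _ ii) _ jj) => a ai /hasP [b bj eab].
    by exists a, b; rewrite /phi_of !inE.
  + have ii : i' \in iota 0 3 by rewrite mem_iota.
    have jj : j \in iota 0 4 by rewrite mem_iota.
    case/hasP: (allP (allP hE2 _ ii) _ jj) => a ai /hasP [b bj eab].
    by exists a, b; rewrite /phi_of !inE.
Qed.

Definition split_rel_l (v : F4V) (s : seq F4V) : rel (option F4V) :=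
  fun x y => match x, y with
  | Some a, Some b =>
      if a == v then [&& b != v, F4 v b & b \in s]
      else if b == v then [&& F4 v a & a \in s]
      else F4 a b
  | None, Some b => (b == v) || [&& b != v, F4 v b & b \notin s]
  | Some a, None => (a == v) || [&& a != v, F4 v a & a \notin s]
  | None, None => false
  end.

Lemma split_rel_lE v (S : {set F4V}) s : S =i s -> split_rel F4 v S = split_rel_l v s.
Proof.
move=> hS; apply: functional_extensionality => x; apply: functional_extensionality => y.
by case: x => [a|]; case: y => [b|] //=; rewrite ?hS.
Qed.

Definition nl (v : F4V) : seq F4V := filter (F4 v) allF4.
Definition v0 : F4V := (@Ordinal 2 0 isT, Some (@Ordinal 4 2 isT)).
Definition v1 : F4V := (@Ordinal 2 1 isT, Some (@Ordinal 4 2 isT)).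

Definition allbs : seq (seq bool) := [:: [:: true; true; true; true]; [:: true; true; true; false]; [:: true; true; false; true]; [:: true; true; false; false]; [:: true; false; true; true]; [:: true; false; true; false]; [:: true; false; false; true]; [:: true; false; false; false]; [:: false; true; true; true]; [:: false; true; true; false]; [:: false; true; false; true]; [:: false; true; false; false]; [:: false; false; true; true]; [:: false; false; true; false]; [:: false; false; false; true]; [:: false; false; false; false]].

Lemma deg_ok : all (fun v => (v == v0) || (v == v1) || (size (nl v) < 4)) allF4.
Proof. vm_compute. reflexivity. Qed.

Lemma big : all (fun v => (size (nl v) == 4) && all (fun m => (count id m != 2) ||
   has (fun L => check (split_rel_l v (mask m (nl v))) L) models) allbs) [:: v0; v1].
Proof. vm_compute. reflexivity. Qed.

Theorem lemma4p10 (v : F4V) (S : {set F4V}) :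
  split_ok F4 v S -> has_minor (Kmn 3 4) (split_rel F4 v S).
Proof.
case=> sub c1 c2.
have Nnl : [set w | F4 v w] =i nl v by move=> w; rewrite inE mem_filter allF4P andbT.
have unl : uniq (nl v) by rewrite filter_uniq ?allF4_uniq.
have cN : #|[set w | F4 v w]| = size (nl v).
  by rewrite -(card_uniqP unl); apply: eq_card.
have sN : 3 < size (nl v).
  rewrite -cN -(cardsID S [set w | F4 v w]).
  have -> : [set w | F4 v w] :&: S = S by apply/setIidPr.
  move: c1 c2; lia.
have vv : v \in [:: v0; v1].
  move: (allP deg_ok v (allF4P v)); rewrite !inE ltnNge.
  by case: (v == v0) => //; case: (v == v1) => //; rewrite sN.
case/andP: (allP big v vv) => /eqP s4 hall.
set m := map (mem S) (nl v).
have Sm : S =i mask m (nl v).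
  move=> w; rewrite /m -filter_mask mem_filter.
  apply/idP/andP => [wS | [] //]; split => //.
  by rewrite -Nnl; apply: (subsetP sub).
have mall : m \in allbs.
  rewrite /m; move: s4; case: (nl v) => [|a [|b [|c [|d [|]]]]] //= _.
  by case: (a \in S); case: (b \in S); case: (c \in S); case: (d \in S).
have hcnt : count id m = 2.
  have uS : uniq (mask m (nl v)) by apply: mask_uniq.
  have cS : #|S| = size (mask m (nl v)) by rewrite -(card_uniqP uS); apply: eq_card.
  have cD : #|[set w | F4 v w] :\: S| = size (nl v) - #|S|.
    rewrite -cN -(cardsID S [set w | F4 v w]).
    have -> : [set w | F4 v w] :&: S = S by apply/setIidPr.
    by rewrite addKn.
  rewrite size_mask ?size_map // in cS.
  move: c1 c2; rewrite cD cS s4 => h1 h2.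
  have : count id m <= 4 by rewrite -s4 -(size_map (mem S)) count_size.
  by move: h1 h2; case: (count id m) => [|[|[|[|[|]]]]].
case/orP: (allP hall m mall); first by rewrite hcnt.
case/hasP=> L _ hL; exists (phi_of L); apply: checkP.
by rewrite (split_rel_lE v Sm).
Qed.
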